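(* Let $a_1,\dots,a_n\in\mathbb R^d$ be orthonormal ($n\le d$), $T=\sum_{i=1}^n a_i^{\otimes4}$, and $f(x)=\langle T,x^{\otimes4}\rangle$ restricted to the unit sphere $S^{d-1}$. Then every local maximum of $f$ on $S^{d-1}$ is a global maximum; i.e., the local maxima of $f$ on $S^{d-1}$ are exactly $\pm a_1,\dots,\pm a_n$.
   Context: $a^{\otimes4}$ denotes the 4-th order tensor with entries $a_ia_ja_ka_l$; $\langle T,S\rangle$ is the entrywise inner product of tensors. A local maximum on $S^{d-1}$ is a point $x\in S^{d-1}$ having a neighborhood $N$ in $S^{d-1}$ with $f(y)\le f(x)$ for all $y\in N$. *)

(* Defs.v *)
From HB Require Import structures.
From mathcomp Require Import all_boot all_order all_algebra.
From mathcomp Require Import all_classical all_reals all_analysis.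
Set Implicit Arguments. Unset Strict Implicit. Unset Printing Implicit Defensive.
Import Order.TTheory GRing.Theory Num.Theory.
Import numFieldNormedType.Exports.
Local Open Scope ring_scope.

Definition tensor4 (R : realType) (n d : nat) (a : 'I_n -> 'rV[R]_d)
  (j k l m : 'I_d) : R :=
  \sum_(i < n) a i 0 j * a i 0 k * a i 0 l * a i 0 m.

Definition ftens (R : realType) (n d : nat) (a : 'I_n -> 'rV[R]_d)
  (x : 'rV[R]_d) : R :=
  \sum_(j < d) \sum_(k < d) \sum_(l < d) \sum_(m < d)
     tensor4 a j k l m * (x 0 j * x 0 k * x 0 l * x 0 m).

Definition sphere (R : realType) (d : nat) (x : 'rV[R]_d) : Prop :=
  \sum_(j < d) x 0 j ^+ 2 = 1.

Definition orthonormal_fam (R : realType) (n d : nat) (a : 'I_n -> 'rV[R]_d) : Prop :=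
  forall i i' : 'I_n, \sum_(j < d) a i 0 j * a i' 0 j = (i == i')%:R.

Definition sphere_local_max (R : realType) (d : nat) (g : 'rV[R]_d -> R)
  (x : 'rV[R]_d) : Prop :=
  sphere x /\ \forall y \near x, sphere y -> g y <= g x.

Definition sphere_global_max (R : realType) (d : nat) (g : 'rV[R]_d -> R)
  (x : 'rV[R]_d) : Prop :=
  sphere x /\ forall y, sphere y -> g y <= g x.

(* Main.v *)
Set Warnings "-notation-overridden,-ambiguous-paths,-notation-incompatible-prefix".
Require Import Defs.
From HB Require Import structures.
From mathcomp Require Import all_boot all_order all_algebra.
From mathcomp Require Import all_classical all_reals all_analysis.
Import Order.TTheory GRing.Theory Num.Theory.
From mathcomp Require Import ring lra.
Import numFieldNormedType.Exports.
Local Open Scope ring_scope.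
Set Implicit Arguments. Unset Strict Implicit. Unset Printing Implicit Defensive.
Definition dotv (R : realType) (d : nat) (u v : 'rV[R]_d) : R :=
  \sum_(k < d) u 0 k * v 0 k.

Lemma sum_pow4 (R : realType) (d : nat) (g : 'I_d -> R) :
  (\sum_(j < d) g j) ^+ 4 =
  \sum_(j < d) \sum_(k < d) \sum_(l < d) \sum_(m < d) g j * g k * g l * g m.
Proof.
set S := \sum_(j < d) g j.
have -> : S ^+ 4 = S * (S * (S * S)) by rewrite !exprS expr0 mulr1.
rewrite {1}/S big_distrl /=; apply: eq_bigr => j _.
rewrite {1}/S big_distrl mulr_sumr /=; apply: eq_bigr => k _.
rewrite {1}/S big_distrl mulr_sumr mulr_sumr /=; apply: eq_bigr => l _.
rewrite /S mulr_sumr mulr_sumr mulr_sumr; apply: eq_bigr => m _.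
by rewrite !mulrA.
Qed.

Lemma ftensE (R : realType) (n d : nat) (a : 'I_n -> 'rV[R]_d) x :
  ftens a x = \sum_(i < n) dotv (a i) x ^+ 4.
Proof.
rewrite /ftens /tensor4 /dotv.
under [RHS]eq_bigr do rewrite sum_pow4.
rewrite [RHS]exchange_big; apply: eq_bigr => j _.
rewrite [RHS]exchange_big; apply: eq_bigr => k _.
rewrite [RHS]exchange_big; apply: eq_bigr => l _.
rewrite [RHS]exchange_big; apply: eq_bigr => m _.
rewrite big_distrl; apply: eq_bigr => i _ /=.

by rewrite !mulrA; ring.
Qed.

Lemma sum_delta (R : realType) (n : nat) (F : 'I_n -> R) (i : 'I_n) :
  \sum_(i' < n) F i' * (i == i')%:R = F i.
Proof.
rewrite (bigD1 i) //= eqxx mulr1 big1 ?addr0 // => i' /negbTE.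
by rewrite eq_sym => ->; rewrite mulr0.
Qed.

Lemma bessel (R : realType) (n d : nat) (a : 'I_n -> 'rV[R]_d) x :
  orthonormal_fam a -> \sum_(i < n) dotv (a i) x ^+ 2 <= dotv x x.
Proof.
move=> ho.
pose c i := dotv (a i) x.
pose S k := \sum_(i < n) c i * a i 0 k.
have h1 : \sum_(k < d) x 0 k * S k = \sum_(i < n) c i ^+ 2.
  rewrite /S; under eq_bigr do rewrite mulr_sumr.
  rewrite exchange_big; apply: eq_bigr => i _.
  rewrite expr2 -/(dotv (a i) x) /dotv mulr_sumr; apply: eq_bigr => k _; ring.
have h2 : \sum_(k < d) S k ^+ 2 = \sum_(i < n) c i ^+ 2.
  rewrite /S; under eq_bigr do rewrite expr2 big_distrl /=.
  rewrite exchange_big; apply: eq_bigr => i _.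
  under eq_bigr do rewrite mulr_sumr.
  rewrite exchange_big /=.
  transitivity (\sum_(i' < n) c i' * c i * (i == i')%:R); last first.
    by rewrite sum_delta expr2.
  apply: eq_bigr => i' _; rewrite -ho /dotv mulr_sumr; apply: eq_bigr => k _.
  ring.
have h0 : 0 <= \sum_(k < d) (x 0 k - S k) ^+ 2.
  by apply: sumr_ge0 => k _; apply: sqr_ge0.
have h3 : \sum_(k < d) (x 0 k - S k) ^+ 2 =
  dotv x x - 2 * \sum_(k < d) x 0 k * S k + \sum_(k < d) S k ^+ 2.
  rewrite /dotv mulr_sumr -sumrB -big_split; apply: eq_bigr => k _ /=; ring.
rewrite -/c; lra.
Qed.

Lemma dotvv (R : realType) (d : nat) (x : 'rV[R]_d) :
  dotv x x = \sum_(k < d) x 0 k ^+ 2.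
Proof. by apply: eq_bigr => k _; rewrite expr2. Qed.

Lemma cs_id (R : realType) (n d : nat) (a : 'I_n -> 'rV[R]_d) (x : 'rV[R]_d) j :
  orthonormal_fam a ->
  \sum_(k < d) (x 0 k - dotv (a j) x * a j 0 k) ^+ 2 = dotv x x - dotv (a j) x ^+ 2.
Proof.
move=> ho; set c := dotv (a j) x.
have h1 : \sum_(k < d) a j 0 k * x 0 k = c by [].
have h2 : \sum_(k < d) a j 0 k * a j 0 k = 1 by rewrite ho eqxx.
clearbody c.
have -> : \sum_(k < d) (x 0 k - c * a j 0 k) ^+ 2 =
  dotv x x - 2 * c * \sum_(k < d) a j 0 k * x 0 k + c ^+ 2 * \sum_(k < d) a j 0 k * a j 0 k.
  rewrite /dotv !mulr_sumr -sumrB -big_split; apply: eq_bigr => k _ /=; ring.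
rewrite h1 h2; ring.
Qed.

Lemma coef_le1 (R : realType) (n d : nat) (a : 'I_n -> 'rV[R]_d) (y : 'rV[R]_d) i :
  orthonormal_fam a -> sphere y -> dotv (a i) y ^+ 2 <= 1.
Proof.
move=> ho sy.
have s1 : dotv y y = 1 by rewrite dotvv.
rewrite -s1; apply: (le_trans _ (bessel y ho)).
by rewrite (bigD1 i) //= lerDl sumr_ge0 // => i' _; apply: sqr_ge0.
Qed.

Lemma f_le1 (R : realType) (n d : nat) (a : 'I_n -> 'rV[R]_d) (y : 'rV[R]_d) :
  orthonormal_fam a -> sphere y -> ftens a y <= 1.
Proof.
move=> ho sy; rewrite ftensE.
apply: le_trans (_ : \sum_(i < n) dotv (a i) y ^+ 2 <= 1).
  apply: ler_sum => i _.
  have h := coef_le1 i ho sy.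
  have -> : dotv (a i) y ^+ 4 = dotv (a i) y ^+ 2 * dotv (a i) y ^+ 2 by rewrite -exprD.
  by rewrite ler_piMr // sqr_ge0.
by rewrite -(_ : dotv y y = 1) ?bessel // dotvv.
Qed.

Lemma dotvN (R : realType) (d : nat) (u v : 'rV[R]_d) : dotv u (- v) = - dotv u v.
Proof. by rewrite /dotv -sumrN; apply: eq_bigr => k _; rewrite mxE mulrN. Qed.

Lemma fa (R : realType) (n d : nat) (a : 'I_n -> 'rV[R]_d) i :
  orthonormal_fam a -> ftens a (a i) = 1 /\ ftens a (- a i) = 1.
Proof.
move=> ho.
have h : ftens a (a i) = 1.
  rewrite ftensE -[RHS](sum_delta (fun _ : 'I_n => (1 : R)) i).
  apply: eq_bigr => i' _; rewrite /dotv ho eq_sym.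
  case: (i == i'); [by rewrite expr1n mulr1 | by rewrite expr0n mulr0].
split => //; rewrite -h !ftensE; apply: eq_bigr => i' _.
by rewrite dotvN (_ : 4%N = (2 * 2)%N) // !exprM sqrrN.
Qed.

Lemma sphere_a (R : realType) (n d : nat) (a : 'I_n -> 'rV[R]_d) i :
  orthonormal_fam a -> sphere (a i) /\ sphere (- a i).
Proof.
move=> ho.
have h : sphere (a i) by rewrite /sphere -dotvv /dotv ho eqxx.
split => //; rewrite /sphere -h; apply: eq_bigr => k _; by rewrite mxE sqrrN.
Qed.

Lemma ypert (R : realType) (n d : nat) (a : 'I_n -> 'rV[R]_d) (x : 'rV[R]_d) j (sg c s : R) :
  orthonormal_fam a -> sphere x -> sg * sg = 1 -> dotv (a j) x = sg * c ->
  0 <= c -> 0 <= s ->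
  sphere ((Num.sqrt (1 + 2 * c * s + s ^+ 2))^-1 *: (x + s *: (sg *: a j))) /\
  ftens a ((Num.sqrt (1 + 2 * c * s + s ^+ 2))^-1 *: (x + s *: (sg *: a j))) =
  ((c + s) ^+ 4 - c ^+ 4 + ftens a x) / (1 + 2 * c * s + s ^+ 2) ^+ 2.
Proof.
move=> ho sx sg2 cj c0 s0.
set D := 1 + 2 * c * s + s ^+ 2.
have D0 : 0 < D by rewrite /D; apply: ltr_wpDr; [apply: sqr_ge0 | apply: ltr_wpDr; [rewrite mulr_ge0 ?mulr_ge0 | ]].
set r := (Num.sqrt D)^-1.
have r2 : r ^+ 2 = D^-1 by rewrite /r exprVn sqr_sqrtr // ltW.
have yE k : ((r *: (x + s *: (sg *: a j))) 0 k) = r * (x 0 k + s * (sg * a j 0 k)).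
  by rewrite !mxE.
have hxx : \sum_(k < d) x 0 k * x 0 k = 1 by rewrite -dotvv.
have hjj : \sum_(k < d) a j 0 k * a j 0 k = 1 by rewrite ho eqxx.
split.
  rewrite /sphere; under eq_bigr do rewrite yE.
  transitivity (r ^+ 2 * (\sum_(k < d) x 0 k * x 0 k + 2 * s * sg * dotv (a j) x
     + s ^+ 2 * (sg * sg) * \sum_(k < d) a j 0 k * a j 0 k)).
    rewrite /dotv !mulr_sumr -!big_split mulr_sumr; apply: eq_bigr => k _ /=; ring.
  rewrite hxx hjj cj r2.
  have -> : 1 + 2 * s * sg * (sg * c) + s ^+ 2 * (sg * sg) * 1 =
    1 + 2 * c * s * (sg * sg) + s ^+ 2 * (sg * sg) by ring.
  by rewrite sg2 !mulr1 -/D mulVf ?gt_eqF.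
have hd i : dotv (a i) (r *: (x + s *: (sg *: a j))) = r * (dotv (a i) x + s * sg * (i == j)%:R).
  rewrite -ho /dotv !mulr_sumr -big_split mulr_sumr; apply: eq_bigr => k _ /=.
  rewrite yE; ring.
rewrite !ftensE; under eq_bigr do rewrite hd.
transitivity (r ^+ 4 * \sum_(i < n) (dotv (a i) x + s * sg * (i == j)%:R) ^+ 4).
  by rewrite mulr_sumr; apply: eq_bigr => i _; rewrite exprMn.
have r4 : r ^+ 4 = (D ^+ 2)^-1 by rewrite (_ : 4%N = (2 * 2)%N) // exprM r2 exprVn.
rewrite r4 mulrC; congr (_ / _).
rewrite (bigD1 j) //= [in RHS](bigD1 j) //= eqxx addrA; congr (_ + _).
  rewrite cj; have -> : (sg * c + s * sg * 1) ^+ 4 = (sg * sg) ^+ 2 * (c + s) ^+ 4 by ring.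
  rewrite sg2 expr1n mul1r.
  have -> : (sg * c) ^+ 4 = (sg * sg) ^+ 2 * c ^+ 4 by ring.
  rewrite sg2 expr1n mul1r; ring.
apply: eq_bigr => i /negbTE ->; by rewrite mulr0 addr0.
Qed.
Lemma key (R : realType) (c f : R) : 0 <= c -> c ^+ 2 < 1 -> 0 <= f -> f <= c ^+ 2 ->
  exists2 del, 0 < del & forall s, 0 < s -> s < del ->
    f * (1 + 2 * c * s + s ^+ 2) ^+ 2 < (c + s) ^+ 4 - c ^+ 4 + f.
Proof.
move=> c0 c1 f0 fc.
pose A := 4 * c ^+ 3 - 4 * c * f.
pose B := 6 * c ^+ 2 - f * (2 + 4 * c ^+ 2).
pose C := 4 * c - 4 * c * f.
pose E := 1 - f.
have hP s : (c + s) ^+ 4 - c ^+ 4 + f - f * (1 + 2 * c * s + s ^+ 2) ^+ 2 =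
   s * (A + B * s) + s ^+ 3 * C + s ^+ 4 * E by rewrite /A /B /C /E; ring.
have E0 : 0 < E by rewrite /E; lra.
have C0 : 0 <= C.
  have -> : C = 4 * c * E by rewrite /C /E; ring.
  by rewrite mulr_ge0 ?mulr_ge0 // ltW.
have A0 : 0 <= A.
  have -> : A = 4 * c * (c ^+ 2 - f) by rewrite /A; ring.
  by rewrite mulr_ge0 ?mulr_ge0 // subr_ge0.
suff : exists2 del, 0 < del & forall s, 0 < s -> s < del ->
    0 < s * (A + B * s) + s ^+ 3 * C + s ^+ 4 * E.
  case=> del d0 H; exists del => // s s0 sd; rewrite -subr_gt0 hP.
  by rewrite H.
have [Apos|] := ltP 0 A.
  exists (Num.min 1 (A / (`|B| + 1))).
    by rewrite lt_min ltr01 divr_gt0 // ltr_wpDl.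
  move=> s s0; rewrite lt_min => /andP [s1 sA].
  have hB : 0 < `|B| + 1 by rewrite ltr_wpDl.
  have sA' : s * (`|B| + 1) < A by rewrite -ltr_pdivlMr.
  have hb : - (`|B| * s) <= B * s.
    by rewrite -mulNr ler_pM2r //; apply: lerNnormlW.
  have h1 : 0 < s * (A + B * s).
    apply: mulr_gt0 => //.
    lra.
  have h2 : 0 <= s ^+ 3 * C by apply: mulr_ge0 => //; apply: exprn_ge0; apply: ltW.
  have h3 : 0 <= s ^+ 4 * E by apply: mulr_ge0; [apply: exprn_ge0; apply: ltW | apply: ltW].
  lra.
move=> A0'.
have Aeq : A = 0 by apply/eqP; rewrite eq_le A0' A0.
have hB : 0 <= B /\ (0 < B \/ c = 0).
  have [ce|cne] := eqVneq c 0.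
    subst c.
    have fz : f = 0 by apply/eqP; rewrite eq_le f0 andbT; move: fc; rewrite expr2 mulr0.
    subst f.
    by rewrite /B; split; [ rewrite expr2 !mul0r !mulr0 subr0 | right].
  have : c * (c ^+ 2 - f) = 0.
    by apply: (@mulfI _ 4); rewrite ?pnatr_eq0 // mulr0 -Aeq /A; ring.
  move/eqP; rewrite mulf_eq0 (negbTE cne) /= subr_eq0 => /eqP fe.
  have hfB : B = 4 * f * E by rewrite /B /E -fe; ring.
  have cpos : 0 < c by rewrite lt_neqAle eq_sym cne.
  have fpos : 0 < f by rewrite -fe expr2 mulr_gt0.
  rewrite hfB; split.
    by rewrite ltW // mulr_gt0 // mulr_gt0.
  by left; rewrite mulr_gt0 // mulr_gt0.
exists 1 => // s s0 _.
case: hB => Bge [Bgt | ce].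
  have h1 : 0 < s * (A + B * s) by rewrite Aeq add0r mulr_gt0 // mulr_gt0.
  have h2 : 0 <= s ^+ 3 * C by apply: mulr_ge0 => //; apply: exprn_ge0; apply: ltW.
  have h3 : 0 <= s ^+ 4 * E by apply: mulr_ge0; [apply: exprn_ge0; apply: ltW | apply: ltW].
  lra.
have h1 : 0 <= s * (A + B * s) by rewrite Aeq add0r mulr_ge0 // ?mulr_ge0 // ltW.
have h2 : 0 <= s ^+ 3 * C by apply: mulr_ge0 => //; apply: exprn_ge0; apply: ltW.
have h3 : 0 < s ^+ 4 * E by rewrite mulr_gt0 // exprn_gt0.
lra.
Qed.

Lemma ycont (R : realType) (d : nat) (x e : 'rV[R]_d) (c : R) :
  ((Num.sqrt (1 + 2 * c * s + s ^+ 2))^-1 *: (x + s *: e) @[s --> (0:R)] --> x)%classic.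
Proof.
have E : (Num.sqrt (1 + 2 * c * 0 + 0 ^+ 2))^-1 *: (x + 0 *: e) = x.
  by rewrite mulr0 expr0n /= !addr0 sqrtr1 invr1 scale1r scale0r addr0.
rewrite -[X in (_ --> X)%classic]E.
apply: cvgZ.
  apply: cvgV; first by rewrite mulr0 expr0n /= !addr0 sqrtr1 oner_neq0.
  apply: continuous_cvg; first exact: sqrt_continuous.
  apply: cvgD; first apply: cvgD.
  - exact: cvg_cst.
  - apply: cvgMl_tmp; exact: cvg_id.
  - rewrite expr2; apply: cvgM; exact: cvg_id.
apply: cvgD; first exact: cvg_cst.
apply: cvgZ; [exact: cvg_id | exact: cvg_cst].
Qed.

Lemma main (R : realType) (n d : nat) (a : 'I_n -> 'rV[R]_d) (x : 'rV[R]_d) :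
  (0 < n)%N -> orthonormal_fam a -> sphere_local_max (ftens a) x ->
  exists i : 'I_n, x = a i \/ x = - a i.
Proof.
move=> hn ho [sx hloc].
pose cc i := dotv (a i) x.
pose i0 := Ordinal hn.
pose j := [arg max_(i > i0) cc i ^+ 2]%O.
have hmax : forall i, cc i ^+ 2 <= cc j ^+ 2.
  rewrite /j; case: arg_maxP => //= k _ Hk i; exact: Hk.
exists j.
case: (pselect (x = a j \/ x = - a j)) => // hne; exfalso.
pose cj := cc j.
pose sg : R := if 0 <= cj then 1 else -1.
have sg2 : sg * sg = 1 by rewrite /sg; case: ifP; rewrite ?mulr1 ?mulrNN ?mulr1.
pose c := sg * cj.
have c0 : 0 <= c.
  rewrite /c /sg; case: ifP => h; first by rewrite mul1r.
  by rewrite mulN1r oppr_ge0 ltW // ltNge h.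
have cjE : cc j = sg * c by rewrite /c mulrA sg2 mul1r.
have hdx : dotv x x = 1 by rewrite dotvv.
have hbess := bessel x ho; rewrite hdx in hbess.
have c2 : c ^+ 2 = cj ^+ 2 by rewrite /c exprMn [sg ^+ 2]expr2 sg2 mul1r.
have hf : ftens a x <= c ^+ 2.
  rewrite ftensE c2.
  apply: le_trans (_ : \sum_(i < n) cc i ^+ 2 * cj ^+ 2 <= _).
    apply: ler_sum => i _.
    have -> : dotv (a i) x ^+ 4 = cc i ^+ 2 * cc i ^+ 2 by rewrite -exprD.
    by rewrite ler_wpM2l ?sqr_ge0 ?hmax.
  by rewrite -big_distrl /= ler_piMl ?sqr_ge0.
have f0 : 0 <= ftens a x.
  rewrite ftensE sumr_ge0 // => i _.
  by rewrite (_ : 4%N = (2 * 2)%N) // exprM sqr_ge0.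
have hc1 : c ^+ 2 < 1.
  rewrite c2; have h := cs_id x j ho; rewrite hdx in h.
  have hs : 0 <= \sum_(k < d) (x 0 k - dotv (a j) x * a j 0 k) ^+ 2.
    by apply: sumr_ge0 => k _; apply: sqr_ge0.
  rewrite lt_neqAle; apply/andP; split; last by rewrite /cj /cc; lra.
  apply/negP => /eqP e1.
  have h0 : \sum_(k < d) (x 0 k - dotv (a j) x * a j 0 k) ^+ 2 = 0.
    by rewrite h -e1 /cj /cc subrr.
  have hk : forall k, x 0 k = cj * a j 0 k.
    move=> k; apply/eqP; rewrite -subr_eq0 -sqrf_eq0; apply/eqP.
    by move/psumr_eq0P: h0 => ->// k' _; apply: sqr_ge0.
  move: e1 => /eqP; rewrite sqrf_eq1 => /orP [] /eqP e1; apply: hne.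
    by left; apply/rowP => k; rewrite hk e1 mul1r.
  by right; apply/rowP => k; rewrite hk e1 mxE mulN1r.
have [del del0 hdel] := key c0 hc1 f0 hf.
have hy := @ycont R d x (sg *: a j) c.
have H : \forall s \near (0 : R),
  sphere ((Num.sqrt (1 + 2 * c * s + s ^+ 2))^-1 *: (x + s *: (sg *: a j))) ->
  ftens a ((Num.sqrt (1 + 2 * c * s + s ^+ 2))^-1 *: (x + s *: (sg *: a j))) <= ftens a x
  := hy _ hloc.
case/nbhs_ballP: H => e /= e0 he.
pose s := Num.min e del / 2.
have hmin : 0 < Num.min e del by rewrite lt_min e0.
have s0 : 0 < s by rewrite divr_gt0.
have sm : s < Num.min e del by rewrite /s ltr_pdivrMr // ltr_pMr // ltr1n.
have se : s < e by apply: lt_le_trans sm _; rewrite ge_min lexx.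
have sd : s < del by apply: lt_le_trans sm _; rewrite ge_min lexx orbT.
have hb : ball (0 : R) e s by rewrite /ball /= sub0r normrN gtr0_norm.
have [sy fy] := ypert ho sx sg2 cjE c0 (ltW s0).
have := he s hb sy; rewrite fy.
have cs : 0 <= c * s by apply: mulr_ge0 => //; apply: ltW.
have ss : 0 <= s ^+ 2 by apply: sqr_ge0.
have D0 : 0 < 1 + 2 * c * s + s ^+ 2 by rewrite -mulrA; lra.
rewrite ler_pdivrMr; last by apply: exprn_gt0.
move=> hle; have := hdel s s0 sd; rewrite mulrC; lra.
Qed.

Theorem theorem5p2 (R : realType) (n d : nat) (a : 'I_n -> 'rV[R]_d) :
  (0 < n)%N -> (n <= d)%N -> orthonormal_fam a ->
  (forall x, sphere_local_max (ftens a) x -> sphere_global_max (ftens a) x) /\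
  (forall x, sphere_local_max (ftens a) x <->
             exists i : 'I_n, x = a i \/ x = - a i).
Proof.
move=> hn _ ho.
have glob : forall x, (exists i : 'I_n, x = a i \/ x = - a i) ->
    sphere_global_max (ftens a) x.
  move=> x [i [->|->]]; (split; [by case: (sphere_a i ho) | move=> y sy]).
    by case: (fa i ho) => -> _; apply: f_le1.
  by case: (fa i ho) => _ ->; apply: f_le1.
split.
  by move=> x hx; apply: glob; apply: main hx.
move=> x; split; first exact: main.
move=> /glob [sx hx]; split => //.
by apply: filterE.
Qed.
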